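(* Let $\mathbf{X}^{(1)}$ and $\mathbf{X}^{(2)}$ be $p$-variate random vectors with absolutely continuous distributions (populations $\Pi^{(1)}$, $\Pi^{(2)}$, with prior probabilities $\pi_1,\pi_2$), fix a unit vector $\mathbf{u}\in\mathbb{R}^p$, and let $Q_Z^{(k)}(\theta;\mathbf{u})$ be the $\theta$-quantile of $Z^{(k)}=\mathbf{u}^{\top}\mathbf{X}^{(k)}$. For $\theta\in(0,1)$ let $Q_{\alpha}(\theta;\mathbf{u})=\min_k Q_Z^{(k)}(\theta;\mathbf{u})$ and $Q_{\beta}(\theta;\mathbf{u})=\max_k Q_Z^{(k)}(\theta;\mathbf{u})$, with $G_\alpha,g_\alpha,\pi_\alpha$ (resp. $G_\beta,g_\beta,\pi_\beta$) the distribution function, density and prior probability of the population attaining the minimum (resp. maximum), and let $\tilde Q(\theta;\mathbf{u})=\theta Q_\alpha(\theta;\mathbf{u})+(1-\theta)Q_\beta(\theta;\mathbf{u})$. Assume that the density functions $g_\alpha(z;\mathbf{u})$ and $g_\beta(z;\mathbf{u})$ exist and are nonzero on the same compact domain $\mathcal{Z}$. Further assume that there is a point $z_0$ with $\pi_\alpha g_\alpha(z_0;\mathbf{u})=\pi_\beta g_\beta(z_0;\mathbf{u})$ such that $\pi_\alpha g_\alpha(z;\mathbf{u})>\pi_\beta g_\beta(z;\mathbf{u})$ for $z$ on one side of $z_0$ and $\pi_\alpha g_\alpha(z;\mathbf{u})<\pi_\beta g_\beta(z;\mathbf{u})$ for $z$ on the other side of $z_0$. Then the directional quantile classifier using the quantile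 $\tilde Q(\theta;\mathbf{u})$ with $\theta$ chosen to minimise the theoretical misclassification probability $$1-\psi(\theta)=\pi_\alpha\{1-G_\alpha(\tilde Q(\theta;\mathbf{u});\mathbf{u})\}+\pi_\beta G_\beta(\tilde Q(\theta;\mathbf{u});\mathbf{u})$$ achieves the optimal Bayes misclassification probability (for classifying on the basis of the projected observation).
   Context: The directional quantile classifier at level $\theta$ and direction $\mathbf{u}$ assigns $\mathbf{y}$ to $\Pi^{(1)}$ if $\Phi^{(2)}(\theta;\mathbf{u}^{\top}\mathbf{y})-\Phi^{(1)}(\theta;\mathbf{u}^{\top}\mathbf{y})>0$ and to $\Pi^{(2)}$ otherwise, where $\Phi^{(k)}(\theta;z)=\{\theta+(1-2\theta)I(z-Q_Z^{(k)}(\theta;\mathbf{u})<0)\}\,|z-Q_Z^{(k)}(\theta;\mathbf{u})|$; equivalently it assigns $z=\mathbf{u}^{\top}\mathbf{y}$ to the population attaining $Q_\alpha$ when $z<\tilde Q(\theta;\mathbf{u})$ and to the other population otherwise, and $1-\psi(\theta)$ is its misclassification probability. *)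

(* Defs.v *)
From HB Require Import structures.
From mathcomp Require Import all_boot all_order all_algebra.
From mathcomp Require Import all_classical all_reals all_analysis.
Set Implicit Arguments. Unset Strict Implicit. Unset Printing Implicit Defensive.
Import Order.TTheory GRing.Theory Num.Theory.
Local Open Scope classical_set_scope.
Local Open Scope ring_scope.

Definition proj_obs {R : realType} {T : Type} (p : nat) (u : 'rV[R]_p)
  (X : 'I_p -> T -> R) : T -> R :=
  fun t => \sum_(i < p) u ord0 i * X i t.

Definition distr_fun {R : realType} {d} {T : measurableType d} (P : probability T R)
  (Z : T -> R) (z : R) : R := fine (P [set t | Z t <= z]).

Definition quantile {R : realType} (G : R -> R) (theta : R) : R :=
  inf [set z | theta <= G z].

Definition Qtilde {R : realType} (G1 G2 : R -> R) (theta : R) : R :=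
  let q1 := quantile G1 theta in let q2 := quantile G2 theta in
  theta * Num.min q1 q2 + (1 - theta) * Num.max q1 q2.

(* Theoretical misclassification probability 1 - psi(theta) of the directional
   quantile classifier:
     pi_alpha (1 - G_alpha(Qt)) + pi_beta G_beta(Qt),
   where alpha is the population attaining the minimal theta-quantile
   (ties broken in favour of population 1). *)
Definition dq_misclass {R : realType} (pi1 pi2 : R) (G1 G2 : R -> R)
  (theta : R) : R :=
  let Qt := Qtilde G1 G2 theta in
  if quantile G1 theta <= quantile G2 theta
  then pi1 * (1 - G1 Qt) + pi2 * G2 Qt
  else pi2 * (1 - G2 Qt) + pi1 * G1 Qt.

(* Optimal Bayes misclassification probability for classifying on the basis of
   the projected observation z: infimum, over all (Borel) classification
   regions A (assign z to Pi^(1) iff z \in A), of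
     pi1 P(Z^(1) \notin A) + pi2 P(Z^(2) \in A). *)
Definition bayes_misclass {R : realType} {d1 d2}
  {T1 : measurableType d1} {T2 : measurableType d2}
  (pi1 pi2 : R) (P1 : probability T1 R) (Z1 : T1 -> R)
  (P2 : probability T2 R) (Z2 : T2 -> R) : R :=
  inf [set r | exists A : set R, measurable A /\
     r = pi1 * fine (P1 (Z1 @^-1` (~` A))) + pi2 * fine (P2 (Z2 @^-1` A))].

(* Submission.v *)
Require Import Defs.
From HB Require Import structures.
From mathcomp Require Import all_boot all_order all_algebra.
From mathcomp Require Import all_classical all_reals all_analysis.
From mathcomp Require Import measurable_realfun lra.
Import Order.TTheory GRing.Theory Num.Theory numFieldNormedType.Exports.
Local Open Scope classical_set_scope.
Local Open Scope ring_scope.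

Module SubmissionHelpers.
Set Implicit Arguments. Unset Strict Implicit. Unset Printing Implicit Defensive.
Local Notation mu := (@lebesgue_measure _).

Lemma pos_itv_int (R : realType) (h : R -> R) (x y : R) : x < y ->
  measurable_fun `]x, y[ h -> (forall z, x < z < y -> 0 < h z) ->
  (0 < \int[lebesgue_measure]_(z in `]x, y[) (h z)%:E)%E.
Proof.
move=> xy mh hpos.
have h0 : forall z, [set` `]x, y[] z -> (0 <= (h z)%:E)%E.
  by move=> z /=; rewrite in_itv /= => /hpos/ltW; rewrite lee_fin.
rewrite lt0e integral_ge0 // andbT.
apply/eqP => H0.
have H1 : (\int[lebesgue_measure]_(z in [set` `]x, y[]) `|(EFin \o h) z|)%E = 0%E.
  rewrite -H0; apply: eq_integral => z zD /=; rewrite ger0_norm // -lee_fin.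
  by apply: h0; move: zD; rewrite inE.
have := @ae_eq_integral_abs _ _ _ lebesgue_measure _ (measurable_itv `]x, y[) (EFin \o h).
move=> /(_ ((measurable_EFinP _ _).2 mh)) [+ _] => /(_ H1).
move=> [N [mN N0 sub]].
have : (lebesgue_measure [set` `]x, y[] <= lebesgue_measure N)%E.
  apply: le_measure; rewrite ?inE //.
  move=> z Dz; apply: sub => /= /(_ Dz) hz.
  by move: Dz => /=; rewrite in_itv /= => /hpos; rewrite -lte_fin hz ltxx.
rewrite N0 lebesgue_measure_itv /= lte_fin xy -EFinB lee_fin subr_le0 leNgt xy.
by [].
Qed.



Lemma pos_Rint (R : realType) (h : R -> R) (D : set R) (x y : R) :
  measurable D -> mu.-integrable D (EFin \o h) ->
  (forall z, D z -> 0 <= h z) -> `]x, y[ `<=` D -> x < y ->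
  (forall z, x < z < y -> 0 < h z) ->
  0 < \int[mu]_(z in D) h z.
Proof.
move=> mD ih h0 sD xy hpos.
have mh : measurable_fun D h by apply/measurable_EFinP; case/integrableP: ih.
have hp1 := @pos_itv_int R h x y xy (measurable_funS mD sD mh) hpos.
have h0' : forall z, D z -> (0 <= (h z)%:E)%E by move=> z /h0; rewrite lee_fin.
have hp2 : (\int[mu]_(z in `]x, y[) (h z)%:E <= \int[mu]_(z in D) (h z)%:E)%E.
  apply: ge0_subset_integral => //; exact/measurable_EFinP.
apply: fine_gt0; rewrite (lt_le_trans hp1 hp2) /=.
case/integrableP: ih => _; apply: le_lt_trans; rewrite le_eqVlt; apply/orP; left.
apply/eqP; apply: eq_integral => z /set_mem Dz /=; rewrite ger0_norm //; exact: h0.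
Qed.



Definition dens (R : realType) (g : R -> R) (a b : R) : Prop :=
  [/\ a < b, measurable_fun setT g, (forall z, a <= z <= b -> 0 < g z),
      (forall z, ~ (a <= z <= b) -> g z = 0) &
      (\int[mu]_(z in setT) (g z)%:E = 1)%E].

Lemma dens_ge0 (R : realType) (g : R -> R) a b : dens g a b -> forall z, 0 <= g z.
Proof.
case=> _ _ gp go _ z; have [/gp/ltW //|] := boolP (a <= z <= b).
move=> /negP zab; rewrite go //.
Qed.

Lemma dens_int (R : realType) (g : R -> R) a b : dens g a b ->
  forall D, measurable D -> mu.-integrable D (EFin \o g).
Proof.
move=> H D mD; have g0 := dens_ge0 H; case: H => _ mg _ _ gT.
apply/integrableP; split.
  by apply/measurable_EFinP; exact: (measurable_funS measurableT (@subsetT _ _) mg).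
apply: (@le_lt_trans _ _ (\int[mu]_(z in setT) (g z)%:E)%E); last by rewrite gT ltey.
rewrite (_ : (\int[mu]_(x in D) `|(EFin \o g) x|)%E = (\int[mu]_(z in D) (g z)%:E)%E).
  apply: ge0_subset_integral => //; first exact/measurable_EFinP.
  by move=> z _; rewrite lee_fin.
by apply: eq_integral => z _ /=; rewrite ger0_norm.
Qed.

Lemma dens_RT (R : realType) (g : R -> R) a b : dens g a b ->
  \int[mu]_(z in setT) g z = 1.
Proof. by case=> _ _ _ _ gT; rewrite /Rintegral gT. Qed.

Lemma dens_RC (R : realType) (g : R -> R) a b : dens g a b ->
  forall A, measurable A ->
  \int[mu]_(z in ~` A) g z = 1 - \int[mu]_(z in A) g z.
Proof.
move=> H A mA; rewrite -(dens_RT H) -(setUCr A) Rintegral_setU //.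
- by rewrite [X in X - _]addrC addrK.
- exact: measurableC mA.
- by rewrite setUCr; exact: (dens_int H measurableT).
- by rewrite disj_set2E setICr.
Qed.

Lemma dens_restr (R : realType) (g : R -> R) a b : dens g a b ->
  forall D, \int[mu]_(z in D) g z = \int[mu]_(z in D `&` `[a, b]) g z.
Proof.
case=> _ _ _ go _ D; rewrite Rintegral_mkcondr; apply: eq_Rintegral => z _.
rewrite patchE; case: ifPn => // /negP zab; rewrite go //.
by move=> zab'; apply: zab; rewrite inE /= in_itv.
Qed.



Definition Gf (R : realType) (g : R -> R) (z : R) :=
  \int[mu]_(t in [set` `]-oo, z]]) g t.

Lemma G_lo (R : realType) (g : R -> R) a b : dens g a b ->
  forall z, z < a -> Gf g z = 0.
Proof.
move=> H z za; rewrite /Gf (dens_restr H).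
rewrite (_ : _ `&` _ = set0) ?Rintegral_set0 //.
apply/seteqP; split => w //= [] /[!in_itv] /= wz /andP[aw wb]; lra.
Qed.

Lemma G_mid (R : realType) (g : R -> R) a b : dens g a b ->
  forall z, a <= z <= b -> Gf g z = \int[mu]_(t in [set` `[a, z]]) g t.
Proof.
move=> H z /andP[az zb]; rewrite /Gf (dens_restr H); congr Rintegral.
apply/seteqP; split => w /=.
  by move=> [] /[!in_itv] /= wz /andP[aw wb]; apply/andP; split.
move=> /[!in_itv] /= /andP[aw wz]; split => //; apply/andP; split => //; lra.
Qed.

Lemma G_hi (R : realType) (g : R -> R) a b : dens g a b ->
  forall z, b <= z -> Gf g z = 1.
Proof.
move=> H z bz; rewrite /Gf (dens_restr H) -(dens_RT H) (dens_restr H setT) setTI.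
congr Rintegral.
apply/seteqP; split => w /=; first by case.
move=> /[!in_itv] /= /andP[aw wb]; split => //; lra.
Qed.

Lemma G_a (R : realType) (g : R -> R) a b : dens g a b -> Gf g a = 0.
Proof.
move=> H; have ab : a < b by case: H.
rewrite (G_mid H) ?lexx ?(ltW ab) // set_itv1; exact: Rintegral_set1.
Qed.

Lemma G_strict (R : realType) (g : R -> R) a b : dens g a b ->
  forall x y, a <= x -> x < y -> y <= b -> Gf g x < Gf g y.
Proof.
move=> H x y ax xy yb.
have g0 := dens_ge0 H; have [_ _ gp _ _] := H.
rewrite (G_mid H) ?ax ?(le_trans (ltW xy) yb) //.
rewrite (G_mid H) ?yb ?(le_trans ax (ltW xy)) // -subr_gt0.
rewrite (@Rintegral_itvB _ g (BLeft a) (BRight y) x).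
- apply: (@pos_Rint _ g _ x y) => //.
  + by apply: (dens_int H); exact: measurable_itv.
  + by move=> z /=; rewrite !in_itv /= => /andP[-> /ltW ->].
  + by move=> z /andP[xz zy]; apply: gp; apply/andP; split; lra.
- by apply: (dens_int H); exact: measurable_itv.
- by rewrite bnd_simp.
- by rewrite bnd_simp ltW.
Qed.

Lemma G_lt (R : realType) (g : R -> R) a b : dens g a b ->
  forall x y, x < y -> a < y -> x < b -> Gf g x < Gf g y.
Proof.
move=> H x y xy ay xb; have ab : a < b by case: H.
have [xa|ax] := ltP x a.
  rewrite (G_lo H xa) -(G_a H).
  have [yb|by_] := leP y b; first exact: (G_strict H (le_refl a) ay yb).
  rewrite (G_hi H (ltW by_)) -(G_hi H (lexx b)); exact: (G_strict H (le_refl a) ab (le_refl b)).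
have [yb|by_] := leP y b; first exact: (G_strict H ax xy yb).
rewrite (G_hi H (ltW by_)) -(G_hi H (lexx b)); exact: (G_strict H ax xb (le_refl b)).
Qed.

Lemma G_le (R : realType) (g : R -> R) a b : dens g a b ->
  forall x y, x <= y -> Gf g x <= Gf g y.
Proof.
move=> H x y; rewrite le_eqVlt => /predU1P[-> //|xy].
have ab : a < b by case: H.
have [ya|ay] := leP y a.
  have Gy : Gf g y = 0.
    by move: ya; rewrite le_eqVlt => /predU1P[->|]; [exact: (G_a H)|exact: (G_lo H)].
  by rewrite Gy (G_lo H (lt_le_trans xy ya)).
have [bx|xb] := leP b x.
  by rewrite (G_hi H bx) (G_hi H (le_trans bx (ltW xy))).
by apply/ltW/(G_lt H).
Qed.

Lemma G_cont (R : realType) (g : R -> R) (a b : R) : dens g a b ->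
  {within `[a, b], continuous (Gf g)}.
Proof.
move=> H; have ab : a < b by case: H.
have := parameterized_integral_continuous (ltW ab) (dens_int H (measurable_itv `[a, b])).
apply: subspace_eq_continuous => z /set_mem /= zab.
by rewrite /from_subspace /= (G_mid H zab).
Qed.



Lemma quantile_eq (R : realType) (G : R -> R) (t x : R) :
  G x = t -> (forall z, z < x -> G z < t) -> quantile G t = x.
Proof.
move=> Gx Glt; rewrite /quantile.
have lb : lbound [set z | t <= G z] x.
  move=> y /= ty; rewrite leNgt; apply/negP => /Glt; rewrite ltNge ty.
  by [].
have xin : [set z | t <= G z] x by rewrite /= Gx.
apply/eqP; rewrite eq_le; apply/andP; split.
  by apply: (ge_inf _ xin); exists x.
by apply: lb_le_inf => //; exists x.
Qed.

Lemma q_spec (R : realType) (g : R -> R) a b : dens g a b ->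
  forall t, 0 < t < 1 ->
  a < quantile (Gf g) t < b /\ Gf g (quantile (Gf g) t) = t.
Proof.
move=> H t /andP[t0 t1]; have ab : a < b by case: H.
have := IVT (ltW ab) (G_cont H).
rewrite (G_a H) (G_hi H (lexx b)) (min_idPl ler01) (max_idPr ler01).
move=> /(_ t); rewrite (ltW t0) (ltW t1) => -[] // c.
rewrite in_itv /= => /andP[ac cb] Gc.
have ac' : a < c.
  by rewrite lt_neqAle ac andbT; apply/eqP => ea; move: Gc; rewrite -ea (G_a H) => t0'; rewrite t0' ltxx in t0.
have cb' : c < b.
  by rewrite lt_neqAle cb andbT; apply/eqP => eb; move: Gc; rewrite eb (G_hi H (lexx b)) => t1'; rewrite t1' ltxx in t1.
have -> : quantile (Gf g) t = c.
  apply: quantile_eq => // z zc; rewrite -Gc; apply: (G_lt H) => //.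
  exact: lt_trans zc cb'.
by rewrite ac' cb'.
Qed.

Lemma q_G (R : realType) (g : R -> R) a b : dens g a b ->
  forall x, a < x < b -> quantile (Gf g) (Gf g x) = x.
Proof.
move=> H x /andP[ax xb]; apply: quantile_eq => // z zx.
apply: (G_lt H) => //; exact: lt_trans zx xb.
Qed.


Lemma Qt_cont (R : realType) (q1 q2 : R -> R) (A : set R) :
  {within A, continuous q1} -> {within A, continuous q2} ->
  {within A, continuous
    (fun t => t * Num.min (q1 t) (q2 t) + (1 - t) * Num.max (q1 t) (q2 t))}.
Proof.
move=> c1 c2 x.
have cid : {within A, continuous (fun t : R => t)}.
  by apply: continuous_subspaceT => y; exact: cvg_id.
have ccst : {within A, continuous (fun t : R => (1 : R))}.
  by apply: continuous_subspaceT => y; exact: cvg_cst.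
have := continuousD (continuousM (cid x) (continuous_min (c1 x) (c2 x)))
  (continuousM (continuousB (ccst x) (cid x)) (continuous_max (c1 x) (c2 x))).
by [].
Qed.

Lemma q_cont (R : realType) (g : R -> R) (a b : R) : dens g a b ->
  forall tl th : R, 0 < tl -> tl <= th -> th < 1 ->
  {within `[tl, th], continuous (quantile (Gf g))}.
Proof.
move=> H tl th tl0 tlh th1.
have t1 : 0 < tl < 1 by apply/andP; split => //; exact: le_lt_trans tlh th1.
have t2 : 0 < th < 1 by apply/andP; split => //; exact: lt_le_trans tl0 tlh.
have [/andP[ac cb] Gc] := q_spec H t1.
have [/andP[ad db] Gd] := q_spec H t2.
set c := quantile (Gf g) tl in ac cb Gc.
set d := quantile (Gf g) th in ad db Gd.
have cd : c <= d.
  rewrite leNgt; apply/negP => dc.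
  have := G_lt H dc ac db; rewrite Gc Gd => /(le_lt_trans tlh); by rewrite ltxx.
have := @segment_can_le_continuous R c d (Gf g) (quantile (Gf g)) cd.
rewrite Gc Gd; apply.
  apply: (continuous_subspaceW _ (G_cont H)) => z /=; rewrite !in_itv /=.
  by move=> /andP[cz zd]; apply/andP; split; [exact: le_trans (ltW ac) cz|exact: le_trans zd (ltW db)].
move=> z; rewrite in_itv /= => /andP[cz zd]; apply: (q_G H).
by apply/andP; split; [exact: lt_le_trans ac cz|exact: le_lt_trans zd db].
Qed.



Lemma dens_intZ (R : realType) (g : R -> R) (a b : R) : dens g a b ->
  forall (k : R) (D : set R), measurable D ->
  mu.-integrable D (EFin \o (fun z => k * g z)).
Proof.
move=> H k D mD.
have := integrableZl _ k (dens_int H mD).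
move=> /(_ mD); apply: eq_integrable => //.
Qed.

Lemma Rint_split (R : realType) (g : R -> R) (a b : R) : dens g a b ->
  forall B S : set R, measurable B -> measurable S ->
  \int[mu]_(z in S) g z =
  \int[mu]_(z in S `&` B) g z + \int[mu]_(z in S `&` ~` B) g z.
Proof.
move=> H B S mB mS.
rewrite -Rintegral_setU.
- by rewrite -setIUr setUCr setIT.
- exact: measurableI.
- exact: measurableI mS (measurableC mB).
- by rewrite -setIUr setUCr setIT; exact: (dens_int H mS).
- by rewrite disj_set2E setIACA setICr setI0.
Qed.

Lemma Rint_cmp (R : realType) (g1 g2 : R -> R) (a b : R) :
  dens g1 a b -> dens g2 a b ->
  forall (k1 k2 : R) (S : set R), measurable S ->
  (forall z, S z -> k2 * g2 z <= k1 * g1 z) ->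
  k2 * \int[mu]_(z in S) g2 z <= k1 * \int[mu]_(z in S) g1 z.
Proof.
move=> H1 H2 k1 k2 S mS hle.
rewrite -!RintegralZl //; first last.
- exact: (dens_int H2 mS).
- exact: (dens_int H1 mS).
apply: le_Rintegral => //.
- exact: (dens_intZ H2 k2 mS).
- exact: (dens_intZ H1 k1 mS).
Qed.

Definition cost (R : realType) (pi1 pi2 : R) (g1 g2 : R -> R) (A : set R) :=
  pi1 * \int[mu]_(z in ~` A) g1 z + pi2 * \int[mu]_(z in A) g2 z.

Lemma cost_opt (R : realType) (g1 g2 : R -> R) (a b : R) :
  dens g1 a b -> dens g2 a b ->
  forall (pi1 pi2 : R) (B : set R), measurable B ->
  (forall z, B z -> pi2 * g2 z <= pi1 * g1 z) ->
  (forall z, ~ B z -> pi1 * g1 z <= pi2 * g2 z) ->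
  forall A, measurable A -> cost pi1 pi2 g1 g2 B <= cost pi1 pi2 g1 g2 A.
Proof.
move=> H1 H2 pi1 pi2 B mB hB hnB A mA; rewrite /cost.
have mCA := measurableC mA; have mCB := measurableC mB.
rewrite (Rint_split H1 mA mCB) (Rint_split H2 mA mB).
rewrite (Rint_split H1 mB mCA) (Rint_split H2 mB mA).
rewrite (setIC (~` B) A) (setIC (~` B) (~` A)) (setIC B A) (setIC B (~` A)).
have c1 : pi2 * \int[mu]_(z in ~` A `&` B) g2 z <= pi1 * \int[mu]_(z in ~` A `&` B) g1 z.
  apply: (Rint_cmp H1 H2); first exact: measurableI.
  by move=> z [_ /hB].
have c2 : pi1 * \int[mu]_(z in A `&` ~` B) g1 z <= pi2 * \int[mu]_(z in A `&` ~` B) g2 z.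
  apply: (Rint_cmp H2 H1); first exact: measurableI.
  by move=> z [_ /hnB].
lra.
Qed.



Lemma Rint_strict (R : realType) (g1 g2 : R -> R) (a b : R) :
  dens g1 a b -> dens g2 a b ->
  forall (k1 k2 : R) (D : set R) (x y : R), measurable D ->
  (forall z, D z -> k1 * g1 z <= k2 * g2 z) -> `]x, y[ `<=` D -> x < y ->
  (forall z, x < z < y -> k1 * g1 z < k2 * g2 z) ->
  k1 * \int[mu]_(z in D) g1 z < k2 * \int[mu]_(z in D) g2 z.
Proof.
move=> H1 H2 k1 k2 D x y mD hle sD xy hlt.
rewrite -subr_gt0 -!RintegralZl //; first last.
  1,2: by [exact: (dens_int H1 mD) | exact: (dens_int H2 mD)].
rewrite -RintegralB //; first last.
  1,2: by [exact: (dens_intZ H1 k1 mD) | exact: (dens_intZ H2 k2 mD)].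
apply: (@pos_Rint _ _ D x y) => //.
- have := integrableB _ (dens_intZ H2 k2 mD) (dens_intZ H1 k1 mD).
  move=> /(_ mD); apply: eq_integrable => // z _ /=; by rewrite EFinB.
- by move=> z /hle; rewrite subr_ge0.
- by move=> z /hlt; rewrite subr_gt0.
Qed.

Lemma inf_attained (R : realType) (E : set R) (x : R) :
  E x -> (forall y, E y -> x <= y) -> inf E = x.
Proof.
move=> Ex lb; apply/eqP; rewrite eq_le; apply/andP; split.
  by apply: (ge_inf _ Ex); exists x.
by apply: lb_le_inf => //; exists x.
Qed.

Lemma err_eq1 (R : realType) (g1 g2 : R -> R) (a b : R) :
  dens g1 a b -> dens g2 a b -> forall (pi1 pi2 t : R),
  quantile (Gf g1) t <= quantile (Gf g2) t ->
  dq_misclass pi1 pi2 (Gf g1) (Gf g2) t =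
  cost pi1 pi2 g1 g2 [set` `]-oo, Qtilde (Gf g1) (Gf g2) t]].
Proof.
move=> H1 H2 pi1 pi2 t le12; rewrite /dq_misclass le12 /cost (dens_RC H1) //.
Qed.

Lemma err_eq2 (R : realType) (g1 g2 : R -> R) (a b : R) :
  dens g1 a b -> dens g2 a b -> forall (pi1 pi2 t : R),
  ~~ (quantile (Gf g1) t <= quantile (Gf g2) t) ->
  dq_misclass pi1 pi2 (Gf g1) (Gf g2) t =
  cost pi1 pi2 g1 g2 (~` [set` `]-oo, Qtilde (Gf g1) (Gf g2) t]]).
Proof.
move=> H1 H2 pi1 pi2 t le12; rewrite /dq_misclass (negbTE le12) /cost setCK.
rewrite (dens_RC H2); last exact: measurable_itv.
rewrite /Gf; lra.
Qed.

Lemma err_cost (R : realType) (g1 g2 : R -> R) (a b : R) :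
  dens g1 a b -> dens g2 a b -> forall (pi1 pi2 t : R),
  exists A, measurable A /\
  dq_misclass pi1 pi2 (Gf g1) (Gf g2) t = cost pi1 pi2 g1 g2 A.
Proof.
move=> H1 H2 pi1 pi2 t.
have [le12|lt21] := boolP (quantile (Gf g1) t <= quantile (Gf g2) t).
  eexists; split; last exact: (err_eq1 H1 H2).
  exact: measurable_itv.
eexists; split; last exact: (err_eq2 H1 H2).
by apply: measurableC; exact: measurable_itv.
Qed.

Lemma Qt_lt (R : realType) (x y z t : R) : x < z -> y < z -> 0 <= t <= 1 ->
  t * Num.min x y + (1 - t) * Num.max x y < z.
Proof. move=> xz yz /andP[t0 t1]; rewrite minEle maxEle; case: (leP x y) => xy; nra. Qed.

Lemma Qt_gt (R : realType) (x y z t : R) : z < x -> z < y -> 0 <= t <= 1 ->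
  z < t * Num.min x y + (1 - t) * Num.max x y.
Proof. move=> xz yz /andP[t0 t1]; rewrite minEle maxEle; case: (leP x y) => xy; nra. Qed.

Lemma Qt_btw1 (R : realType) (x y z t : R) : x <= y -> 0 < t < 1 ->
  t * Num.min x y + (1 - t) * Num.max x y = z -> x <= z <= y.
Proof.
move=> xy /andP[t0 t1]; rewrite minEle maxEle xy => e.
apply/andP; split; nra.
Qed.

Lemma Qt_btw2 (R : realType) (x y z t : R) : y < x -> 0 < t < 1 ->
  t * Num.min x y + (1 - t) * Num.max x y = z -> y <= z <= x.
Proof.
move=> xy /andP[t0 t1]; rewrite minEle maxEle leNgt xy /= => e.
apply/andP; split; nra.
Qed.


Lemma ar1 (R : realType) (p1 p2 c x : R) : 0 < p1 -> 0 < c -> p1 <= p2 ->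
  p2 * c <= p1 * x -> x < c -> False.
Proof. move=> *; nra. Qed.
Lemma ar2 (R : realType) (p1 p2 c x : R) : 0 < p2 -> c < 1 -> p2 < p1 ->
  p1 * (1 - c) <= p2 * (1 - x) -> c < x -> False.
Proof. move=> *; nra. Qed.
Lemma ar3 (R : realType) (p1 p2 c x : R) : 0 < p2 -> 0 < c -> p2 <= p1 ->
  p1 * c < p2 * x -> x <= c -> False.
Proof. move=> *; nra. Qed.
Lemma ar4 (R : realType) (p1 p2 c x : R) : 0 < p1 -> c < 1 -> p1 < p2 ->
  p2 * (1 - c) <= p1 * (1 - x) -> c <= x -> False.
Proof. move=> *; nra. Qed.
Lemma ar_t (R : realType) (y1 y2 : R) : 0 < y1 -> y1 < 1 -> 0 < y2 -> y2 < 1 ->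
  (0 < y1 * y2 / 2) /\ (y1 * y2 / 2 < y1) /\ (y1 * y2 / 2 < y2) /\
  (y1 < 1 - (1 - y1) * (1 - y2) / 2) /\ (y2 < 1 - (1 - y1) * (1 - y2) / 2) /\
  (1 - (1 - y1) * (1 - y2) / 2 < 1).
Proof. move=> *; split; [|split; [|split; [|split; [|split]]]]; nra. Qed.

End SubmissionHelpers.
Import SubmissionHelpers.

Theorem theorem1 (R : realType) (p : nat)
  (d1 : measure_display) (T1 : measurableType d1) (P1 : probability T1 R)
  (d2 : measure_display) (T2 : measurableType d2) (P2 : probability T2 R)
  (X1 : 'I_p -> {RV P1 >-> R}) (X2 : 'I_p -> {RV P2 >-> R})
  (u : 'rV[R]_p) (pi1 pi2 : R) (g1 g2 : R -> R) (a b z0 : R) :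
  \sum_(i < p) u ord0 i ^+ 2 = 1 ->
  0 < pi1 -> 0 < pi2 -> pi1 + pi2 = 1 ->
  (* g_k is a density of Z^(k) = u^T X^(k) *)
  measurable_fun setT g1 -> measurable_fun setT g2 ->
  (forall A : set R, measurable A ->
     P1 (proj_obs u (fun i => X1 i) @^-1` A)
     = (\int[lebesgue_measure]_(z in A) (g1 z)%:E)%E) ->
  (forall A : set R, measurable A ->
     P2 (proj_obs u (fun i => X2 i) @^-1` A)
     = (\int[lebesgue_measure]_(z in A) (g2 z)%:E)%E) ->
  (* both densities are nonzero exactly on the same compact domain [a, b] *)
  a < b ->
  (forall z, a <= z <= b -> 0 < g1 z /\ 0 < g2 z) ->
  (forall z, ~ (a <= z <= b) -> g1 z = 0 /\ g2 z = 0) ->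
  (* single crossing of pi_k g_k at an interior point z0 *)
  a < z0 < b ->
  pi1 * g1 z0 = pi2 * g2 z0 ->
  ((forall z, a <= z < z0 -> pi1 * g1 z > pi2 * g2 z) /\
   (forall z, z0 < z <= b -> pi1 * g1 z < pi2 * g2 z)) \/
  ((forall z, a <= z < z0 -> pi1 * g1 z < pi2 * g2 z) /\
   (forall z, z0 < z <= b -> pi1 * g1 z > pi2 * g2 z)) ->
  let Z1 := proj_obs u (fun i => X1 i) in
  let Z2 := proj_obs u (fun i => X2 i) in
  let err := dq_misclass pi1 pi2 (distr_fun P1 Z1) (distr_fun P2 Z2) in
  exists theta0, 0 < theta0 < 1 /\
    (forall theta, 0 < theta < 1 -> err theta0 <= err theta) /\
    err theta0 = bayes_misclass pi1 pi2 P1 Z1 P2 Z2.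
Proof.
move=> u1 p1 p2 p12 mg1 mg2 hP1 hP2 ab gpos gout /andP[az0 z0b] e0 cross Z1 Z2.
have H1 : dens g1 a b.
  split => //; [by move=> z /gpos[] | by move=> z /gout[] |].
  by rewrite -hP1 // preimage_setT probability_setT.
have H2 : dens g2 a b.
  split => //; [by move=> z /gpos[] | by move=> z /gout[] |].
  by rewrite -hP2 // preimage_setT probability_setT.
have eG1 : distr_fun P1 Z1 = Gf g1.
  apply/funext => z; rewrite /distr_fun /Gf /Rintegral -hP1; last exact: measurable_itv.
  by congr (fine (P1 _)); apply/seteqP; split => t /=; rewrite in_itv.
have eG2 : distr_fun P2 Z2 = Gf g2.
  apply/funext => z; rewrite /distr_fun /Gf /Rintegral -hP2; last exact: measurable_itv.
  by congr (fine (P2 _)); apply/seteqP; split => t /=; rewrite in_itv.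
have ecost : forall A, measurable A ->
    pi1 * fine (P1 (Z1 @^-1` ~` A)) + pi2 * fine (P2 (Z2 @^-1` A)) =
    cost pi1 pi2 g1 g2 A.
  by move=> A mA; rewrite /cost /Rintegral hP1 ?hP2 //; exact: measurableC.
cbv zeta; rewrite eG1 eG2.
suff [c [c01 [B [mB hB hnB errc]]]] : exists c, 0 < c < 1 /\
    exists B : set R, [/\ measurable B,
      (forall z, B z -> pi2 * g2 z <= pi1 * g1 z),
      (forall z, ~ B z -> pi1 * g1 z <= pi2 * g2 z) &
      dq_misclass pi1 pi2 (Gf g1) (Gf g2) c = cost pi1 pi2 g1 g2 B].
  exists c; split => //; split.
    move=> t _; have [A [mA ->]] := err_cost H1 H2 pi1 pi2 t.
    by rewrite errc; exact: (cost_opt H1 H2 mB hB hnB mA).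
  rewrite /bayes_misclass errc; symmetry; apply: inf_attained.
    by exists B; split => //; rewrite ecost.
  move=> y [A [mA ->]]; rewrite ecost //.
  exact: (cost_opt H1 H2 mB hB hnB mA).
have s1 : 0 < Gf g1 z0 < 1.
  rewrite -{1}(G_a H1) -(G_hi H1 (lexx b)).
  by apply/andP; split; apply: (G_lt H1).
have s2 : 0 < Gf g2 z0 < 1.
  rewrite -{1}(G_a H2) -(G_hi H2 (lexx b)).
  by apply/andP; split; apply: (G_lt H2).
move: s1 s2; set y1 := Gf g1 z0; set y2 := Gf g2 z0 => /andP[y10 y11] /andP[y20 y21].
pose tl := y1 * y2 / 2; pose th := 1 - (1 - y1) * (1 - y2) / 2.
have [tl0 [tl1 [tl2 [th1' [th2' th1]]]]] := ar_t y10 y11 y20 y21.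
rewrite -/tl -/th in tl0 tl1 tl2 th1' th2' th1.
have tlth : tl <= th by exact: ltW (lt_trans tl1 th1').
have tl01 : 0 < tl < 1 by rewrite tl0 (lt_trans tl1 y11).
have th01 : 0 < th < 1 by rewrite th1 (lt_trans y10 th1').
have [_ G1tl] := q_spec H1 tl01.
have [_ G2tl] := q_spec H2 tl01.
have [_ G1th] := q_spec H1 th01.
have [_ G2th] := q_spec H2 th01.
have q1tl : quantile (Gf g1) tl < z0.
  by rewrite ltNge; apply/negP => /(G_le H1); rewrite G1tl -/y1 leNgt tl1.
have q2tl : quantile (Gf g2) tl < z0.
  by rewrite ltNge; apply/negP => /(G_le H2); rewrite G2tl -/y2 leNgt tl2.
have q1th : z0 < quantile (Gf g1) th.
  by rewrite ltNge; apply/negP => /(G_le H1); rewrite G1th -/y1 leNgt th1'.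
have q2th : z0 < quantile (Gf g2) th.
  by rewrite ltNge; apply/negP => /(G_le H2); rewrite G2th -/y2 leNgt th2'.
have Qtl : Qtilde (Gf g1) (Gf g2) tl < z0.
  by apply: Qt_lt => //; rewrite (ltW tl0) (ltW (lt_trans tl1 y11)).
have Qth : z0 < Qtilde (Gf g1) (Gf g2) th.
  by apply: Qt_gt => //; rewrite (ltW th1) (ltW (lt_trans y10 th1')).
have cQ : {within `[tl, th], continuous (Qtilde (Gf g1) (Gf g2))}.
  exact: (Qt_cont (q_cont H1 tl0 tlth th1) (q_cont H2 tl0 tlth th1)).
have := IVT tlth cQ.
rewrite (min_idPl (ltW (lt_trans Qtl Qth))) (max_idPr (ltW (lt_trans Qtl Qth))).
move=> /(_ z0); rewrite (ltW Qtl) (ltW Qth) => -[] // c cI Qc.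
move: cI; rewrite in_itv /= => /andP[tlc cth].
have c01 : 0 < c < 1 by rewrite (lt_le_trans tl0 tlc) (le_lt_trans cth th1).
have [/andP[aq1 q1b] Gq1] := q_spec H1 c01.
have [/andP[aq2 q2b] Gq2] := q_spec H2 c01.
have Qc' : c * Num.min (quantile (Gf g1) c) (quantile (Gf g2) c) +
   (1 - c) * Num.max (quantile (Gf g1) c) (quantile (Gf g2) c) = z0 := Qc.
move: aq1 q1b Gq1 aq2 q2b Gq2 Qc'.
set q1 := quantile (Gf g1) c; set q2 := quantile (Gf g2) c.
move=> aq1 q1b Gq1 aq2 q2b Gq2 Qc'.
exists c; split => //.
have mz0 : measurable [set` `]-oo, z0]] by exact: measurable_itv.
case: cross => [[cl cr]|[cl cr]].
-
  have fle : forall z, z <= z0 -> pi2 * g2 z <= pi1 * g1 z.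
    move=> z zz0; have [az|za] := leP a z.
      move: zz0; rewrite le_eqVlt => /predU1P[->|zz0]; first by rewrite e0.
      by apply/ltW/cl/andP.
    have [-> ->] : g1 z = 0 /\ g2 z = 0.
      by apply: gout => /andP[]; rewrite leNgt za.
    by rewrite !mulr0.
  have fge : forall z, z0 < z -> pi1 * g1 z <= pi2 * g2 z.
    move=> z z0z; have [zb|bz] := leP z b.
      by apply/ltW/cr/andP.
    have [-> ->] : g1 z = 0 /\ g2 z = 0.
      by apply: gout => /andP[_]; rewrite leNgt bz.
    by rewrite !mulr0.
  have q12 : q1 <= q2.
    rewrite leNgt; apply/negP => q21.
    have /andP[q2z0 z0q1] := Qt_btw2 q21 c01 Qc'.
    case: (leP pi1 pi2) => pp.
    + have cmp : pi2 * Gf g2 q2 <= pi1 * Gf g1 q2.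
        apply: (Rint_cmp H1 H2); first exact: measurable_itv.
        move=> z /=; rewrite in_itv /= => zq2; apply: fle; exact: le_trans zq2 q2z0.
      have lt1 : Gf g1 q2 < Gf g1 q1 by apply: (G_lt H1).
      rewrite Gq2 in cmp; rewrite Gq1 in lt1.
      by case/andP: c01 => c0 _; case: (ar1 p1 c0 pp cmp lt1).
    + have cmp : pi1 * \int[lebesgue_measure]_(z in ~` [set` `]-oo, q1]]) g1 z <=
                 pi2 * \int[lebesgue_measure]_(z in ~` [set` `]-oo, q1]]) g2 z.
        apply: (Rint_cmp H2 H1); first by apply: measurableC; exact: measurable_itv.
        move=> z /=; rewrite in_itv /= => /negP; rewrite -ltNge => q1z.
        apply: fge; exact: le_lt_trans z0q1 q1z.
      rewrite (dens_RC H1) ?(dens_RC H2) in cmp; try exact: measurable_itv.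
      have lt2 : Gf g2 q2 < Gf g2 q1 by apply: (G_lt H2).
      rewrite -/(Gf g1 q1) -/(Gf g2 q1) Gq1 in cmp; rewrite Gq2 in lt2.
      by case/andP: c01 => _ c1; case: (ar2 p2 c1 pp cmp lt2).
  exists [set` `]-oo, z0]]; split.
  + exact: mz0.
  + by move=> z /=; rewrite in_itv /=; exact: fle.
  + by move=> z /=; rewrite in_itv /= => /negP; rewrite -ltNge; exact: fge.
  + by rewrite (err_eq1 H1 H2 _ _ q12) Qc.
-
  have fle : forall z, z <= z0 -> pi1 * g1 z <= pi2 * g2 z.
    move=> z zz0; have [az|za] := leP a z.
      move: zz0; rewrite le_eqVlt => /predU1P[->|zz0]; first by rewrite e0.
      by apply/ltW/cl/andP.
    have [-> ->] : g1 z = 0 /\ g2 z = 0.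
      by apply: gout => /andP[]; rewrite leNgt za.
    by rewrite !mulr0.
  have fge : forall z, z0 < z -> pi2 * g2 z <= pi1 * g1 z.
    move=> z z0z; have [zb|bz] := leP z b.
      by apply/ltW/cr/andP.
    have [-> ->] : g1 z = 0 /\ g2 z = 0.
      by apply: gout => /andP[_]; rewrite leNgt bz.
    by rewrite !mulr0.
  have q12 : ~~ (q1 <= q2).
    apply/negP => q12.
    have /andP[q1z0 z0q2] := Qt_btw1 q12 c01 Qc'.
    case: (leP pi2 pi1) => pp.
    + have cmp : pi1 * Gf g1 q1 < pi2 * Gf g2 q1.
        apply: (@Rint_strict _ _ _ _ _ H1 H2 pi1 pi2 [set` `]-oo, q1]] a q1) => //.
        * move=> z /=; rewrite in_itv /= => zq1; apply: fle; exact: le_trans zq1 q1z0.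
        * by move=> z /=; rewrite !in_itv /= => /andP[_ /ltW].
        * move=> z /andP[az zq1]; apply: cl; apply/andP; split; first exact: ltW.
          exact: lt_le_trans zq1 q1z0.
      have le2 : Gf g2 q1 <= Gf g2 q2 by apply: (G_le H2).
      rewrite Gq1 in cmp; rewrite Gq2 in le2.
      by case/andP: c01 => c0 _; case: (ar3 p2 c0 pp cmp le2).
    + have cmp : pi2 * \int[lebesgue_measure]_(z in ~` [set` `]-oo, q2]]) g2 z <=
                 pi1 * \int[lebesgue_measure]_(z in ~` [set` `]-oo, q2]]) g1 z.
        apply: (Rint_cmp H1 H2); first by apply: measurableC; exact: measurable_itv.
        move=> z /=; rewrite in_itv /= => /negP; rewrite -ltNge => q2z.
        apply: fge; exact: le_lt_trans z0q2 q2z.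
      rewrite (dens_RC H1) ?(dens_RC H2) in cmp; try exact: measurable_itv.
      have le1 : Gf g1 q1 <= Gf g1 q2 by apply: (G_le H1).
      rewrite -/(Gf g1 q2) -/(Gf g2 q2) Gq2 in cmp; rewrite Gq1 in le1.
      by case/andP: c01 => _ c1; case: (ar4 p1 c1 pp cmp le1).
  exists (~` [set` `]-oo, z0]]); split.
  + exact: measurableC.
  + by move=> z /=; rewrite in_itv /= => /negP; rewrite -ltNge; exact: fge.
  + move=> z /=; rewrite in_itv /= => nz; apply: fle.
    by case: (boolP (z <= z0)) => // /negP /nz.
  + by rewrite (err_eq2 H1 H2 _ _ q12) Qc.
Qed.
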